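(* In the construction described in the context, at the end of the construction $k(A)\le\log t$ for every $A\in V_{cc}$; consequently every edge $e\in E$ crosses at most $2\log t$ of the complete cuts $C_G(X_1),\dots,C_G(X_{t-1})$, and in particular belongs to at most $2\log t$ of the sets $C_1,\dots,C_{t-1}$.
   Context: $\log$ denotes $\log_2$. Setting: $G=(V,E)$ is a connected finite undirected graph (parallel edges allowed), $w:E\to\mathbb{R}_{\ge0}$ edge weights, $c:E\to\mathbb{R}_{>0}$ edge costs, $n=|V|$. For $S\subseteq V$, $C_G(S)=\{e\in E:|e\cap S|=1\}$ (complete cut; its edges cross it) and $C_G(S,W)=\{e\in C_G(S):w(e)<W\}$ (partial cut). $F\subseteq E$ is a set with $G'=G\setminus F=(V,E\setminus F)$ connected; $B=c(F)$ and $\Delta=\mathrm{MST}(G')-\mathrm{MST}(G)$ (MST weights w.r.t. $w$). Construction: let $T$ be a minimum spanning tree of $G$ and $T\cap F=\{e_1,\dots,e_{t-1}\}$, with $t\ge2$. Removing these edges splits $T$ into components with vertex sets $A_1,\dots,A_t$ (a partition of $V$). Let $G'_{cc}$ be the multigraph with vertex set $V_{cc}=\{A_1,\dots,A_t\}$ having, for every edge $\{u,v\}\in E\setminus F$ with $u\in A_i$, $v\in A_j$, an edge between $A_i$ and $A_j$ of weight $w(\{u,v\})$ (identified with the original edge). Let $T'_{cc}$ be a minimum spanning tree of $G'_{cc}$, with edges $e'_1,\dots,e'_{t-1}$ indexed so that $w(e'_1)\le\dots\le w(e'_{t-1})$ (ties broken arbitrarily). For each $i$, deleting $e'_i,e'_{i+1},\dots,e'_{t-1}$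 from $T'_{cc}$ leaves a forest in which $e'_i$ joins two components $L_i,R_i\subseteq V_{cc}$. Counters $k(A)=0$ for all $A\in V_{cc}$ initially, and $k(S)=\max_{A\in S}k(A)$. For $i=1,\dots,t-1$ in order: set $X_i=L_i$ if $k(L_i)\le k(R_i)$, else $X_i=R_i$; then increase $k(A)$ by $1$ for every $A\in X_i$. Identifying a set of vertices of $G'_{cc}$ with the union of the corresponding vertex sets in $V$, define $C_i=C_G(X_i,w(e'_i))$. *)

(* Defs.v *)
From HB Require Import structures.
From mathcomp Require Import all_boot all_order all_algebra.
From mathcomp Require Import reals exp.
Set Implicit Arguments. Unset Strict Implicit. Unset Printing Implicit Defensive.
Import Order.TTheory GRing.Theory Num.Theory.
Local Open Scope ring_scope.

Definition log2 {R : realType} (x : R) : R := ln x / ln 2.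

Section Graphs.
Variables (Vt Et : finType) (ends : Et -> Vt * Vt).

(* x and y are joined by an edge of S (edges are undirected; parallel edges allowed) *)
Definition adj (S : {set Et}) : rel Vt :=
  fun x y => [exists e in S, (ends e == (x, y)) || (ends e == (y, x))].

Definition conn (S : {set Et}) (x y : Vt) : bool := connect (adj S) x y.

Definition connected_on (VS : {set Vt}) (S : {set Et}) : Prop :=
  {in VS &, forall x y, conn S x y}.

(* S is a spanning tree of the graph (VS, ES): S is a connected, acyclic
   (no edge of S lies on a cycle of S) subgraph spanning VS *)
Definition spanning_tree (VS : {set Vt}) (ES S : {set Et}) : Prop :=
  [/\ S \subset ES, connected_on VS S &
      {in S, forall e, ~~ conn (S :\ e) (ends e).1 (ends e).2}].

Definition is_mst {R : realType} (w : Et -> R) (VS : {set Vt}) (ES S : {set Et}) : Prop :=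
  spanning_tree VS ES S /\
  forall S', spanning_tree VS ES S' -> \sum_(e in S) w e <= \sum_(e in S') w e.

Definition cut (S : {set Vt}) : {set Et} :=
  [set e | ((ends e).1 \in S) != ((ends e).2 \in S)].

Definition pcut {R : realType} (w : Et -> R) (S : {set Vt}) (W : R) : {set Et} :=
  [set e in cut S | w e < W].
End Graphs.

Section Construction.
Variables (R : realType) (V E : finType) (ends : E -> V * V) (w : E -> R)
  (F T Tcc : {set E}) (eo : nat -> E).

Definition comp (x : V) : {set V} := [set y | conn ends (T :\: F) x y].

Definition Vcc : {set {set V}} := [set comp x | x in [set: V]].

Definition tt : nat := #|Vcc|.

(* endpoints of an edge in the contracted multigraph G'_cc *)
Definition ends_cc (e : E) : {set V} * {set V} :=
  (comp (ends e).1, comp (ends e).2).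

(* the forest T'_cc minus e'_i, ..., e'_{t-1} (0-based: edges eo j, j < i) *)
Definition forest_before (i : nat) : {set E} := [set eo j | j : 'I_i].

Definition Lc (i : nat) : {set {set V}} :=
  [set A in Vcc | conn ends_cc (forest_before i) (ends_cc (eo i)).1 A].
Definition Rc (i : nat) : {set {set V}} :=
  [set A in Vcc | conn ends_cc (forest_before i) (ends_cc (eo i)).2 A].

Definition kmax (k : {set V} -> nat) (S : {set {set V}}) : nat :=
  (\max_(A in S) k A)%N.

Definition Xsel (k : {set V} -> nat) (i : nat) : {set {set V}} :=
  if (kmax k (Lc i) <= kmax k (Rc i))%N then Lc i else Rc i.

Fixpoint kproc (n : nat) : {set V} -> nat :=
  match n with
  | 0 => fun _ => 0%N
  | n'.+1 => let k := kproc n' in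
             fun A => (k A + (A \in Xsel k n'))%N
  end.

(* X_i (0-based) as a set of components *)
Definition X (i : nat) : {set {set V}} := Xsel (kproc i) i.

Definition XV (i : nat) : {set V} := \bigcup_(A in X i) A.

Definition Ci (i : nat) : {set E} := pcut ends w (XV i) (w (eo i)).
End Construction.

(* Main.v *)
Require Import Defs.
From HB Require Import structures.
From mathcomp Require Import all_boot all_order all_algebra.
From mathcomp Require Import reals exp.
From mathcomp Require Import zify.
Import Order.TTheory GRing.Theory Num.Theory.
Set Implicit Arguments. Unset Strict Implicit. Unset Printing Implicit Defensive.

Section G.
Variables (Vt Et : finType) (ends : Et -> Vt * Vt).

Lemma adj_sym S : symmetric (adj ends S).
Proof.
move=> x y; apply/existsP/existsP => -[e /andP[eS /orP[]/eqP H]];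
  by exists e; rewrite eS H ?eqxx ?orbT.
Qed.

Lemma conn_sym S x y : conn ends S x y = conn ends S y x.
Proof. exact: (sym_connect_sym (adj_sym S)). Qed.

Lemma conn_trans S x y z : conn ends S x y -> conn ends S y z -> conn ends S x z.
Proof. exact: connect_trans. Qed.

Lemma conn_refl S x : conn ends S x x.
Proof. exact: connect0. Qed.

Lemma conn_mono (S S' : {set Et}) x y : S \subset S' -> conn ends S x y -> conn ends S' x y.
Proof.
move=> sub; apply: connect_sub => u v /existsP[e /andP[eS He]].
apply: connect1; apply/existsP; exists e; by rewrite (subsetP sub _ eS).
Qed.

Lemma conn_add S e x z : conn ends (e |: S) x z ->
  conn ends S x z || ((conn ends S x (ends e).1 || conn ends S x (ends e).2) &&
                      (conn ends S (ends e).1 z || conn ends S (ends e).2 z)).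
Proof.
case/connectP => p pth ->; elim: p x pth => [|y p IH] x /=.
  by rewrite conn_refl.
case/andP => xy /IH {IH}; set z0 := last y p.
case/existsP: xy => f /andP[]; rewrite in_setU1 => /orP[/eqP -> He|fS Hf].
  have Hx : conn ends S x (ends e).1 || conn ends S x (ends e).2.
    by case/orP: He => /eqP ->; rewrite conn_refl ?orbT.
  have Hy : conn ends S y (ends e).1 || conn ends S y (ends e).2.
    by case/orP: He => /eqP ->; rewrite conn_refl ?orbT.
  case/orP => [yz|/andP[_ ->]]; last by rewrite Hx orbT.
  apply/orP; right; rewrite Hx /=.
  by case/orP: Hy => H; rewrite conn_sym in H; rewrite (conn_trans H yz) ?orbT.
have xy : conn ends S x y.
  by apply: connect1; apply/existsP; exists f; rewrite fS.
case/orP => [yz|/andP[/orP[] H ->]]; first by rewrite (conn_trans xy yz).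
  by rewrite (conn_trans xy H) orbT.
by rewrite (conn_trans xy H) !orbT.
Qed.
End G.

Section C.
Variables (V E : finType) (ends : E -> V * V) (F T Tcc : {set E}) (eo : nat -> E).
Local Notation cc := (ends_cc ends F T).
Local Notation VC := (Vcc ends F T).
Local Notation t := (tt ends F T).
Local Notation kp := (kproc ends F T eo).
Local Notation fb := (forest_before eo).

Hypothesis Hacyc : {in Tcc, forall e, ~~ conn cc (Tcc :\ e) (cc e).1 (cc e).2}.
Hypothesis Hdist : forall i j, (i < j < t.-1)%N -> eo i != eo j.
Hypothesis Himg : Tcc = [set eo (nat_of_ord i) | i : 'I_(t.-1)].

Definition Cn n A := [set B in VC | conn cc (fb n) A B].

Lemma fb_S n : fb n.+1 = eo n |: fb n.
Proof.
apply/setP=> f; rewrite in_setU1; apply/imsetP/orP.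
- case=> j _ ->; have [jn|nj] := ltnP j n.
  + by right; apply/imsetP; exists (Ordinal jn).
  + by left; have -> : nat_of_ord j = n by have:= ltn_ord j; lia.
- case=> [/eqP ->|/imsetP[j _ ->]]; first by exists ord_max.
  by exists (widen_ord (leqnSn n) j).
Qed.

Lemma cc_VC e : (cc e).1 \in VC /\ (cc e).2 \in VC.
Proof. by split; apply: imset_f; rewrite inE. Qed.

Lemma kmax_le (k : {set V} -> nat) (S : {set {set V}}) m : (forall B, B \in S -> k B <= m) -> kmax k S <= m.
Proof. by move=> H; apply/bigmax_leqP. Qed.

Lemma le_kmax (k : {set V} -> nat) (S : {set {set V}}) B : B \in S -> k B <= kmax k S.
Proof. by move=> H; apply: leq_bigmax_cond. Qed.

Lemma arith kL kR l r : kL <= kR -> 2^kL <= l -> 2^kR <= r -> 2^(maxn kL.+1 kR) <= l + r.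
Proof.
move=> le1 h1 h2; have [lt|ge] := ltnP kL kR.
  by rewrite (maxn_idPr lt); apply: leq_trans h2 (leq_addl _ _).
have e : kL = kR by apply/eqP; rewrite eqn_leq le1 ge.
rewrite -e (maxn_idPl (leqnSn kL)) expnS mul2n -addnn.
by apply: leq_add => //; rewrite e.
Qed.

Lemma step_bound (k : {set V} -> nat) (P Q S : {set {set V}}) :
  S \subset P :|: Q -> (forall B, B \in P -> B \in Q -> False) ->
  kmax k P <= kmax k Q -> 2^(kmax k P) <= #|P| -> 2^(kmax k Q) <= #|Q| ->
  2^(kmax (fun B => k B + (B \in P)) S) <= #|P| + #|Q|.
Proof.
move=> sub dis le h1 h2; apply: leq_trans (arith le h1 h2).
apply: leq_pexp2l => //; apply: kmax_le => B /(subsetP sub); rewrite in_setU.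
case BP: (B \in P) => /=.
  by move=> _; rewrite addn1 leq_max ltnS le_kmax.
by rewrite addn0 => BQ; rewrite leq_max le_kmax ?orbT.
Qed.

Lemma inv n : n <= t.-1 -> forall A, A \in VC -> 2^(kmax (kp n) (Cn n A)) <= #|Cn n A|.
Proof.
elim: n => [_ A AV|n IH lt A AV].
  rewrite (_ : kmax _ _ = 0) ?expn0; last by apply/eqP; rewrite -leqn0; apply: kmax_le.
  by rewrite card_gt0; apply/set0Pn; exists A; rewrite inE AV conn_refl.
have {}IH := IH (ltnW lt).
set e := eo n; set a := (cc e).1; set b := (cc e).2.
have [aV bV] := cc_VC e.
have eT : e \in Tcc by rewrite Himg; apply/imsetP; exists (Ordinal lt).
have fbsub : fb n \subset Tcc :\ e.
  apply/subsetP => f /imsetP[j _ ->]; rewrite in_setD1 Hdist /=; last first.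
    by rewrite ltn_ord; apply: leq_trans lt.
  rewrite Himg; apply/imsetP.
  have jt : (j < t.-1)%N by apply: ltn_trans lt; rewrite ltn_ord.
  by exists (Ordinal jt).
have dis : forall B, B \in Cn n a -> B \in Cn n b -> False.
  move=> B; rewrite !inE => /andP[_ aB] /andP[_ bB].
  have ab : conn cc (fb n) a b by apply: conn_trans aB _; rewrite conn_sym.
  by move: (Hacyc eT); rewrite (conn_mono fbsub ab).
have conn' : forall B C, conn cc (fb n.+1) B C ->
  conn cc (fb n) B C || ((conn cc (fb n) B a || conn cc (fb n) B b) &&
                      (conn cc (fb n) a C || conn cc (fb n) b C)).
  by move=> B C; rewrite fb_S; apply: conn_add.
have mono : fb n \subset fb n.+1 by rewrite fb_S subsetUr.
have Xeq : X ends F T eo n = if kmax (kp n) (Cn n a) <= kmax (kp n) (Cn n b)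
                             then Cn n a else Cn n b by [].
have kpS : kp n.+1 = fun B => kp n B + (B \in X ends F T eo n) by [].
case: (boolP ((A \in Cn n a) || (A \in Cn n b))) => HA.
  have CeqLR : Cn n.+1 A = Cn n a :|: Cn n b.
    apply/eqP; rewrite eqEsubset; apply/andP; split; apply/subsetP => B.
      rewrite !inE => /andP[BV /conn' /orP[AB|/andP[_ /orP[]->]]]; rewrite BV ?orbT //.
      move: HA; rewrite !inE AV /= => /orP[] H; by rewrite (conn_trans H AB) ?orbT.
    have ab' : conn cc (fb n.+1) a b.
      by apply: connect1; apply/existsP; exists e; rewrite fb_S setU11 eqxx.
    have toA : forall C, C \in Cn n a :|: Cn n b -> conn cc (fb n.+1) a C.
      move=> C; rewrite !inE => /orP[]/andP[_ H]; first exact: conn_mono mono H.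
      by apply: conn_trans ab' _; apply: conn_mono mono H.
    move=> BLR; rewrite inE (_ : B \in VC) /=; last by move: BLR; rewrite !inE => /orP[]/andP[].
    by apply: conn_trans (toA B BLR); rewrite conn_sym; apply: toA; rewrite in_setU.
  have card : #|Cn n.+1 A| = #|Cn n a| + #|Cn n b|.
    rewrite CeqLR cardsU (_ : Cn n a :&: Cn n b = set0) ?cards0 ?subn0 //.
    by apply/setP => B; rewrite !inE; apply/negbTE/negP => /andP[] h1 h2; apply: (dis B); rewrite inE.
  rewrite card kpS Xeq; case: ifP => le.
    apply: step_bound; [by rewrite CeqLR|exact: dis|exact: le|exact: IH|exact: IH].
  rewrite addnC; apply: step_bound.
  - by rewrite CeqLR setUC.
  - by move=> B h1 h2; apply: (dis B).
  - by rewrite ltnW // ltnNge le.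
  - exact: IH.
  - exact: IH.
have sub : Cn n.+1 A \subset Cn n A.
  apply/subsetP => B; rewrite !inE => /andP[BV AB]; rewrite BV /=.
  move: (conn' _ _ AB) => /orP[//|/andP[H _]]; exfalso.
  by move: HA H; rewrite !inE AV /= !(conn_sym _ _ A) => /norP[/negbTE -> /negbTE ->].
have notX : forall B, B \in Cn n A -> B \notin X ends F T eo n.
  move=> B; rewrite Xeq !inE => /andP[_ AB].
  apply/negP; case: ifP => _; rewrite inE => /andP[_ H]; move: HA; 
    by rewrite !inE AV /= (conn_trans H _) ?orbT // conn_sym.
have c1 : #|Cn n A| <= #|Cn n.+1 A|.
  apply: subset_leq_card; apply/subsetP => B; rewrite !inE => /andP[-> /=].
  exact: conn_mono.
have c2 : 2^(kmax (kp n.+1) (Cn n.+1 A)) <= 2^(kmax (kp n) (Cn n A)).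
  apply: leq_pexp2l => //; apply: kmax_le => B /(subsetP sub) BC.
  by rewrite kpS (negbTE (notX B BC)) addn0 le_kmax.
exact: leq_trans c2 (leq_trans (IH A AV) c1).
Qed.
End C.

Lemma count_k (V E : finType) (ends : E -> V * V) (F T : {set E}) (eo : nat -> E) m A :
  #|[set i : 'I_m | A \in X ends F T eo i]| = kproc ends F T eo m A.
Proof.
rewrite -sum1_card big_mkcond /=.
rewrite (eq_bigr (fun i : 'I_m => nat_of_bool (A \in X ends F T eo i))); last first.
  by move=> i _; rewrite inE; case: (A \in _).
elim: m => [|m IH]; first by rewrite big_ord0.
by rewrite big_ord_recr /= IH.
Qed.

Lemma comp_eq (V E : finType) (ends : E -> V * V) (F T : {set E}) x u :
  u \in Defs.comp ends F T x -> Defs.comp ends F T x = Defs.comp ends F T u.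
Proof.
rewrite inE => xu; apply/setP => y; rewrite !inE /conn.
by rewrite (same_connect (sym_connect_sym (adj_sym _ _)) xu).
Qed.

Local Open Scope ring_scope.
Lemma log_bound (R : realType) (k t : nat) : (2 ^ k <= t)%N ->
  (k%:R : R) <= log2 (t%:R : R).
Proof.
move=> h; have t0 : (0 < t)%N by apply: leq_trans h; rewrite expn_gt0.
have l2 : (0 : R) < ln 2 by apply: ln_gt0; rewrite ltr1n.
rewrite /log2 ler_pdivlMr // mulr_natl.
rewrite -lnXn ?ltr0n // ler_ln ?posrE ?exprn_gt0 ?ltr0n //.
by rewrite -natrX ler_nat.
Qed.

Lemma XV_X (V E : finType) (ends : E -> V * V) (F T : {set E}) (eo : nat -> E) i x :
  x \in XV ends F T eo i -> Defs.comp ends F T x \in X ends F T eo i.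
Proof.
case/bigcupP => A AX xA.
have : A \in Vcc ends F T by move: AX; rewrite /X /Xsel; case: ifP => _; rewrite inE => /andP[].
by case/imsetP => y _ Ay; move: xA AX; rewrite Ay => /comp_eq ->.
Qed.

Theorem mainTheorem9 (R : realType) (V E : finType) (ends : E -> V * V)
  (w c : E -> R) (F T Tcc : {set E}) (eo : nat -> E) :
  (* G = (V, E) connected, w >= 0, c > 0 *)
  connected_on ends [set: V] [set: E] ->
  (forall e, 0 <= w e) -> (forall e, 0 < c e) ->
  (* G' = G \ F connected *)
  connected_on ends [set: V] (~: F) ->
  (* T is an MST of G, and T meets F (t >= 2) *)
  is_mst ends w [set: V] [set: E] T ->
  T :&: F != set0 ->
  (* T'_cc is an MST of G'_cc *)
  is_mst (ends_cc ends F T) w (Vcc ends F T) (~: F) Tcc ->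
  (* eo 0, ..., eo (t-2) enumerate T'_cc with nondecreasing weights *)
  (forall i j, (i < j < (tt ends F T).-1)%N -> eo i != eo j) ->
  Tcc = [set eo (nat_of_ord i) | i : 'I_((tt ends F T).-1)] ->
  (forall i j, (i <= j < (tt ends F T).-1)%N -> w (eo i) <= w (eo j)) ->
  let t := tt ends F T in
  (forall A, A \in Vcc ends F T ->
     ((kproc ends F T eo t.-1 A)%:R : R) <= log2 (t%:R : R)) /\
  (forall e : E,
     (#|[set i : 'I_t.-1 | e \in cut ends (XV ends F T eo i)]|%:R : R)
       <= 2 * log2 (t%:R : R)) /\
  (forall e : E,
     (#|[set i : 'I_t.-1 | e \in Ci ends w F T eo i]|%:R : R)
       <= 2 * log2 (t%:R : R)).
Proof.
move=> _ _ _ _ _ _ [[_ _ Hacyc] _] Hdist Himg _ t.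
have Hk : forall A, A \in Vcc ends F T -> (2 ^ kproc ends F T eo t.-1 A <= t)%N.
  move=> A AV.
  have h := inv Hacyc Hdist Himg (leqnn _) AV.
  have AC : A \in Cn ends F T eo t.-1 A by rewrite inE AV conn_refl.
  have h1 := le_kmax (kproc ends F T eo t.-1) AC.
  have h2 : (#|Cn ends F T eo t.-1 A| <= t)%N.
    by apply: subset_leq_card; apply/subsetP => B; rewrite inE => /andP[].
  exact: leq_trans (leq_pexp2l _ h1) (leq_trans h h2).
have P1 : forall A, A \in Vcc ends F T ->
     ((kproc ends F T eo t.-1 A)%:R : R) <= log2 (t%:R : R).
  by move=> A AV; apply: log_bound; exact: Hk.
have H2 : forall e, (#|[set i : 'I_t.-1 | e \in cut ends (XV ends F T eo i)]| <=
   kproc ends F T eo t.-1 (Defs.comp ends F T (ends e).1) +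
   kproc ends F T eo t.-1 (Defs.comp ends F T (ends e).2))%N.
  move=> e; rewrite -!count_k.
  apply: leq_trans (subset_leq_card (_ : _ \subset
     [set i : 'I_t.-1 | Defs.comp ends F T (ends e).1 \in X ends F T eo i] :|:
     [set i : 'I_t.-1 | Defs.comp ends F T (ends e).2 \in X ends F T eo i])) _.
    apply/subsetP => i; rewrite !inE.
    case: (boolP ((ends e).1 \in XV ends F T eo i)) => [/XV_X -> //|_].
    by case: (boolP ((ends e).2 \in XV ends F T eo i)) => [/XV_X ->|]; rewrite ?orbT.
  by rewrite cardsU leq_subr.
have H2' : forall e, (#|[set i : 'I_t.-1 | e \in cut ends (XV ends F T eo i)]|%:R : R)
       <= 2 * log2 (t%:R : R).
  move=> e; apply: le_trans (_ : _ <= (kproc ends F T eo t.-1 (Defs.comp ends F T (ends e).1) +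
   kproc ends F T eo t.-1 (Defs.comp ends F T (ends e).2))%:R) _.
    by rewrite ler_nat H2.
  rewrite natrD mulr_natl mulr2n; apply: lerD; apply: P1; apply: imset_f; by rewrite inE.
split=> //; split=> // e.
apply: le_trans (H2' e); rewrite ler_nat; apply: subset_leq_card.
by apply/subsetP => i; rewrite !inE => /andP[].
Qed.
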